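(* Let $\mathcal{A}$ be a complex Banach algebra with identity, let $\lambda$ be a nonzero complex number, and let $a \in \mathcal{A}^{qnil}$ and $b \in \mathcal{A}^d$. If $$ab = \lambda\, b a b^\pi,$$ then $a + b \in \mathcal{A}^d$ and $$(a + b)^d = b^d + \sum_{n=0}^{\infty} (b^d)^{n+2} a (a + b)^n,$$ where the series converges.
   Context: For $x\in\mathcal{A}$, $\mathrm{comm}(x)=\{y\in\mathcal{A}: xy=yx\}$. $\mathcal{A}^{qnil}$ is the set of quasinilpotent elements of $\mathcal{A}$, i.e. those $x$ with $\lim_{n\to\infty}\|x^n\|^{1/n}=0$. An element $x\in\mathcal{A}$ has a generalized Drazin (g-Drazin) inverse if there is $y \in \mathrm{comm}(x)$ with $y = yxy$ and $x - x^2y \in \mathcal{A}^{qnil}$; such $y$ is unique and denoted $x^d$. $\mathcal{A}^d$ denotes the set of g-Drazin invertible elements. The spectral idempotent of $x\in\mathcal{A}^d$ is $x^\pi = 1 - xx^d$. *)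

(* Defs.v *)
From Stdlib Require Import Reals.
Open Scope R_scope.
Set Implicit Arguments.

Definition Cplx : Type := (R * R)%type.
Definition C0 : Cplx := (0, 0).
Definition C1 : Cplx := (1, 0).
Definition Cplus (z w : Cplx) : Cplx := (fst z + fst w, snd z + snd w).
Definition Cmult (z w : Cplx) : Cplx :=
  (fst z * fst w - snd z * snd w, fst z * snd w + snd z * fst w).
Definition Cmod (z : Cplx) : R := sqrt (fst z ^ 2 + snd z ^ 2).

Record BanachAlgebra : Type := {
  car :> Type;
  bzero : car;
  bone : car;
  badd : car -> car -> car;
  bopp : car -> car;
  bmul : car -> car -> car;
  bscal : Cplx -> car -> car;
  bnorm : car -> R;
  badd_assoc : forall x y z, badd x (badd y z) = badd (badd x y) z;
  badd_comm : forall x y, badd x y = badd y x;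
  badd_0l : forall x, badd bzero x = x;
  badd_oppr : forall x, badd x (bopp x) = bzero;
  bmul_assoc : forall x y z, bmul x (bmul y z) = bmul (bmul x y) z;
  bmul_1l : forall x, bmul bone x = x;
  bmul_1r : forall x, bmul x bone = x;
  bmul_addl : forall x y z, bmul (badd x y) z = badd (bmul x z) (bmul y z);
  bmul_addr : forall x y z, bmul x (badd y z) = badd (bmul x y) (bmul x z);
  bscal_1 : forall x, bscal C1 x = x;
  bscal_assoc : forall c d x, bscal c (bscal d x) = bscal (Cmult c d) x;
  bscal_addC : forall c d x, bscal (Cplus c d) x = badd (bscal c x) (bscal d x);
  bscal_addV : forall c x y, bscal c (badd x y) = badd (bscal c x) (bscal c y);
  bscal_mull : forall c x y, bscal c (bmul x y) = bmul (bscal c x) y;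
  bscal_mulr : forall c x y, bscal c (bmul x y) = bmul x (bscal c y);
  bnorm_ge0 : forall x, 0 <= bnorm x;
  bnorm_eq0 : forall x, bnorm x = 0 -> x = bzero;
  bnorm_triangle : forall x y, bnorm (badd x y) <= bnorm x + bnorm y;
  bnorm_scal : forall c x, bnorm (bscal c x) = Cmod c * bnorm x;
  bnorm_submult : forall x y, bnorm (bmul x y) <= bnorm x * bnorm y;
  bcomplete : forall u : nat -> car,
    (forall eps, 0 < eps -> exists N, forall m n, (N <= m)%nat -> (N <= n)%nat ->
        bnorm (badd (u m) (bopp (u n))) < eps) ->
    exists l, forall eps, 0 < eps -> exists N, forall n, (N <= n)%nat ->
        bnorm (badd (u n) (bopp l)) < eps
}.

Arguments bzero {b}.
Arguments bone {b}.

Section Ops.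
Context {A : BanachAlgebra}.

Definition bsub (x y : A) : A := badd A x (bopp A y).

Fixpoint bpow (x : A) (n : nat) : A :=
  match n with O => bone | S n => bmul A x (bpow x n) end.

Definition bconverges (u : nat -> A) (l : A) : Prop :=
  forall eps, 0 < eps -> exists N, forall n, (N <= n)%nat -> bnorm A (bsub (u n) l) < eps.

(* partial sums  sum_{k=0}^{n-1} f k *)
Fixpoint bpartial (f : nat -> A) (n : nat) : A :=
  match n with O => bzero | S n => badd A (bpartial f n) (f n) end.

Definition bseries_sum (f : nat -> A) (s : A) : Prop := bconverges (bpartial f) s.

(* nonnegative n-th root, with the convention root of 0 = 0 *)
Definition nthroot (r : R) (n : nat) : R :=
  if Rle_dec r 0 then 0 else Rpower r (/ INR n).

Definition qnil (x : A) : Prop := Un_cv (fun n => nthroot (bnorm A (bpow x n)) n) 0.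

Definition commutes (x y : A) : Prop := bmul A x y = bmul A y x.

Definition is_gdrazin (x y : A) : Prop :=
  commutes x y /\ y = bmul A y (bmul A x y) /\ qnil (bsub x (bmul A (bpow x 2) y)).

Definition gdrazin_invertible (x : A) : Prop := exists y, is_gdrazin x y.

(* spectral idempotent x^pi = 1 - x x^d, given the g-Drazin inverse xd *)
Definition spectral_idem (x xd : A) : A := bsub bone (bmul A x xd).

End Ops.

(* Main.v *)
Require Import Defs.
From Stdlib Require Import Reals Lra Lia.
From Stdlib Require Import Ncring Ncring_tac.
Open Scope R_scope.

Section S.
Variable A : BanachAlgebra.

#[local] Instance bops : @Ring_ops (car A) bzero bone (badd A) (bmul A) (@bsub A) (bopp A) eq := {}.
#[local] Instance bring : Ring (Ro:=bops).
Proof.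
  constructor; try exact _; intros; simpl.
  all: try apply badd_0l; try apply badd_comm; try apply badd_assoc; try apply bmul_1l;
    try apply bmul_1r; try apply bmul_assoc; try apply bmul_addl; try apply bmul_addr;
    try reflexivity; try apply badd_oppr.
Qed.

Ltac nr := non_commutative_ring.

Notation "x ** y" := (bmul A x y) (at level 40, left associativity).
Notation "x +++ y" := (badd A x y) (at level 50, left associativity).
Notation "x --- y" := (bsub x y) (at level 50, left associativity).
Notation nrm := (bnorm A).

Lemma sub_eq0 (x y : A) : x --- y = bzero -> x = y.
Proof. intros H. transitivity ((x --- y) +++ y). nr. rewrite H. nr. Qed.

Lemma mul0l (x : A) : bzero ** x = bzero. Proof. nr. Qed.
Lemma mul0r (x : A) : x ** bzero = bzero. Proof. nr. Qed.

Lemma scal0 c : bscal A c (bzero : A) = bzero.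
Proof.
  assert (H : bscal A c (bzero +++ bzero) = bscal A c bzero +++ bscal A c bzero) by apply bscal_addV.
  set (z := bscal A c bzero) in *.
  replace (bzero +++ bzero) with (bzero : car A) in H by nr.
  transitivity (z +++ z --- z). nr. rewrite <- H. nr.
Qed.

Lemma scalC0 (z : A) : bscal A C0 z = bzero.
Proof.
  assert (H : bscal A (Cplus C0 C0) z = bscal A C0 z +++ bscal A C0 z) by apply bscal_addC.
  replace (Cplus C0 C0) with C0 in H by (unfold Cplus, C0; simpl; f_equal; ring).
  set (w := bscal A C0 z) in *.
  transitivity (w +++ w --- w). nr. rewrite <- H. nr.
Qed.

Lemma scal_neg1 (z : A) : bscal A (-1, 0) z = bopp A z.
Proof.
  apply sub_eq0.
  assert (H : bscal A (Cplus (-1,0) Defs.C1) z = bscal A (-1,0) z +++ bscal A Defs.C1 z) by apply bscal_addC.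
  replace (Cplus (-1,0) Defs.C1) with C0 in H by (unfold Cplus, C0, Defs.C1; simpl; f_equal; ring).
  rewrite scalC0, bscal_1 in H.
  transitivity (bscal A (-1, 0) z +++ z). nr. now rewrite <- H.
Qed.

Lemma Cmod_neg1 : Cmod (-1, 0) = 1.
Proof. unfold Cmod; simpl fst; simpl snd. replace ((-1) ^ 2 + 0 ^ 2) with 1 by ring. apply sqrt_1. Qed.

Lemma norm_opp (z : A) : nrm (bopp A z) = nrm z.
Proof. rewrite <- scal_neg1, bnorm_scal, Cmod_neg1. ring. Qed.

Lemma norm_sub_sym (x y : A) : nrm (x --- y) = nrm (y --- x).
Proof. replace (x --- y) with (bopp A (y --- x)) by nr. apply norm_opp. Qed.

Lemma norm_zero : nrm (bzero : A) = 0.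
Proof. rewrite <- (scalC0 bzero), bnorm_scal. unfold Cmod, C0; simpl fst; simpl snd.
  replace (0 ^ 2 + 0 ^ 2) with 0 by ring. rewrite sqrt_0. ring. Qed.

Lemma scal_mul_l c (x y : A) : bscal A c x ** y = bscal A c (x ** y).
Proof. symmetry; apply bscal_mull. Qed.
Lemma scal_mul_r c (x y : A) : x ** bscal A c y = bscal A c (x ** y).
Proof. symmetry; apply bscal_mulr. Qed.

Lemma bpow_S (x : A) n : bpow x (S n) = x ** bpow x n. Proof. reflexivity. Qed.
Lemma bpow_Sr (x : A) n : bpow x (S n) = bpow x n ** x.
Proof. induction n; simpl. nr. simpl in IHn. transitivity (x ** (bpow x n ** x)). now rewrite <- IHn. nr. Qed.
Lemma bpow_add (x : A) m n : bpow x (m + n) = bpow x m ** bpow x n.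
Proof. induction m; simpl. nr. rewrite IHm. nr. Qed.

Lemma norm_ge1 : 0 <= nrm (bone : A). Proof. apply bnorm_ge0. Qed.

Lemma norm_pow (x : A) n : nrm (bpow x n) <= nrm bone * nrm x ^ n.
Proof.
  induction n; simpl. lra.
  eapply Rle_trans. apply bnorm_submult.
  assert (0 <= nrm x) by apply bnorm_ge0.
  replace (nrm bone * (nrm x * nrm x ^ n)) with (nrm x * (nrm bone * nrm x ^ n)) by ring.
  apply Rmult_le_compat_l; auto.
Qed.

Lemma norm_mul3 (x y z : A) : nrm (x ** y ** z) <= nrm x * nrm y * nrm z.
Proof.
  eapply Rle_trans. apply bnorm_submult.
  apply Rmult_le_compat_r. apply bnorm_ge0. apply bnorm_submult.
Qed.


Definition small (x : A) : Prop :=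
  forall eps, 0 < eps -> exists K, forall n, nrm (bpow x n) <= K * eps ^ n.

Lemma small_K_nonneg (x : A) eps K : (forall n, nrm (bpow x n) <= K * eps ^ n) -> 0 <= K.
Proof. intros H. specialize (H O). simpl in H. pose proof (bnorm_ge0 A bone). lra. Qed.

Lemma fin_bound (g : nat -> R) M : exists K, forall n, (n < M)%nat -> g n <= K.
Proof.
  induction M. exists 0. intros; lia.
  destruct IHM as [K HK]. exists (Rmax K (g M)). intros n Hn.
  destruct (Nat.eq_dec n M). subst. apply Rmax_r.
  eapply Rle_trans. apply HK. lia. apply Rmax_l.
Qed.

Lemma qnil_small (x : A) : qnil x -> small x.
Proof.
  intros Hq eps Heps.
  destruct (Hq eps Heps) as [N HN].
  destruct (fin_bound (fun n => nrm (bpow x n) / eps ^ n) (S N)) as [K HK].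
  exists (Rmax K 1). intros n.
  assert (Hp : 0 < eps ^ n) by (apply pow_lt; lra).
  destruct (Compare_dec.le_lt_dec n N) as [Hle | Hlt].
  - specialize (HK n ltac:(lia)). simpl in HK.
    apply Rle_trans with (K * eps ^ n).
    + apply (Rmult_le_compat_r (eps ^ n)) in HK; [|lra].
      unfold Rdiv in HK. rewrite Rmult_assoc, Rinv_l, Rmult_1_r in HK; lra.
    + apply Rmult_le_compat_r; [lra| apply Rmax_l].
  - specialize (HN n ltac:(lia)). unfold R_dist, nthroot in HN.
    rewrite Rminus_0_r in HN.
    apply Rle_trans with (eps ^ n); [| rewrite <- (Rmult_1_l (eps ^ n)) at 1;
       apply Rmult_le_compat_r; [lra | apply Rmax_r]].
    destruct (Rle_dec (nrm (bpow x n)) 0) as [H0|H0]. lra.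
    apply Rlt_le. unfold Rpower in HN.
    rewrite Rabs_right in HN by (left; apply exp_pos).
    rewrite <- (exp_ln eps) in HN by lra.
    apply exp_lt_inv in HN.
    assert (Hn : 0 < INR n) by (apply lt_0_INR; lia).
    assert (ln (nrm (bpow x n)) < INR n * ln eps).
    { apply Rmult_lt_compat_l with (r := INR n) in HN; auto.
      rewrite <- Rmult_assoc, Rinv_r, Rmult_1_l in HN; lra. }
    rewrite <- ln_pow in H by lra.
    rewrite <- (exp_ln (nrm (bpow x n))) by lra. rewrite <- (exp_ln (eps ^ n)) by lra.
    apply exp_increasing. auto.
Qed.

Lemma small_qnil (x : A) : small x -> qnil x.
Proof.
  intros Hs eps Heps.
  destruct (Hs (eps / 2) ltac:(lra)) as [K HK].
  destruct (Pow_x_infinity 2 ltac:(rewrite Rabs_right; lra) (K + 1)) as [N HN].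
  exists (S N). intros n Hn.
  unfold R_dist, nthroot. rewrite Rminus_0_r.
  destruct (Rle_dec (nrm (bpow x n)) 0) as [H0|H0].
  { rewrite Rabs_R0; lra. }
  unfold Rpower. rewrite Rabs_right by (left; apply exp_pos).
  specialize (HN n ltac:(lia)). rewrite Rabs_right in HN by (left; apply pow_lt; lra).
  assert (Hlt : nrm (bpow x n) < eps ^ n).
  { eapply Rle_lt_trans. apply HK.
    unfold Rdiv. rewrite Rpow_mult_distr, pow_inv.
    assert (0 < eps ^ n) by (apply pow_lt; lra).
    assert (0 < 2 ^ n) by (apply pow_lt; lra).
    replace (K * (eps ^ n * / 2 ^ n)) with ((K / 2 ^ n) * eps ^ n) by (field; lra).
    rewrite <- (Rmult_1_l (eps ^ n)) at 2. apply Rmult_lt_compat_r; auto.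
    apply Rmult_lt_reg_r with (2 ^ n); auto. unfold Rdiv. rewrite Rmult_assoc, Rinv_l; lra. }
  assert (Hn0 : 0 < INR n) by (apply lt_0_INR; lia).
  rewrite <- (exp_ln eps) by lra. apply exp_increasing.
  apply ln_increasing in Hlt; [| lra]. rewrite ln_pow in Hlt by lra.
  apply Rmult_lt_reg_l with (INR n); auto.
  rewrite <- Rmult_assoc, Rinv_r, Rmult_1_l; lra.
Qed.

Lemma small_transfer (x y : A) K0 : 0 <= K0 ->
  (forall n, nrm (bpow y (S n)) <= K0 * (nrm (bpow x (S n)) + nrm (bpow x n))) ->
  small x -> small y.
Proof.
  intros HK0 Hb Hs eps Heps.
  destruct (Hs eps Heps) as [K HK].
  pose proof (small_K_nonneg _ _ _ HK) as HKp.
  exists (Rmax (nrm bone) (K0 * K * (1 + / eps))). intros [|n].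
  - simpl. rewrite Rmult_1_r. apply Rmax_l.
  - eapply Rle_trans. apply Hb.
    apply Rle_trans with (K0 * (K * eps ^ S n + K * eps ^ n)).
    { apply Rmult_le_compat_l; auto. apply Rplus_le_compat; apply HK. }
    apply Rle_trans with (K0 * K * (1 + / eps) * eps ^ S n).
    { right. simpl. field. lra. }
    apply Rmult_le_compat_r. apply pow_le; lra. apply Rmax_r.
Qed.

Fixpoint iters (mu : Cplx) (k : nat) (z : A) : A :=
  match k with O => z | S k => bscal A mu (iters mu k z) end.

Lemma iters_norm mu k (z : A) : Cmod mu <= 1 -> nrm (iters mu k z) <= nrm z.
Proof.
  intros Hm. induction k; simpl. lra.
  rewrite bnorm_scal. pose proof (bnorm_ge0 A (iters mu k z)).
  pose proof (sqrt_pos (fst mu ^ 2 + snd mu ^ 2)). unfold Cmod in *. nra.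
Qed.

Lemma iters_mull mu k (x y : A) : iters mu k x ** y = iters mu k (x ** y).
Proof. induction k; simpl; auto. rewrite scal_mul_l. now rewrite IHk. Qed.
Lemma iters_mulr mu k (x y : A) : x ** iters mu k y = iters mu k (x ** y).
Proof. induction k; simpl; auto. rewrite scal_mul_r. now rewrite IHk. Qed.

Lemma iters_S mu k (z : A) : iters mu (S k) z = iters mu k (bscal A mu z).
Proof. induction k; simpl; auto. simpl in IHk. now rewrite IHk. Qed.

Lemma qcomm_pow (u v : A) mu : u ** v = bscal A mu (v ** u) ->
  forall k, bpow u k ** v = iters mu k (v ** bpow u k).
Proof.
  intros H k. induction k; simpl. nr.
  transitivity (u ** (bpow u k ** v)). nr. rewrite IHk, iters_mulr.
  transitivity (iters mu k (u ** v ** bpow u k)). f_equal; nr.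
  rewrite H, scal_mul_l. change (bscal A mu (iters mu k (v ** (u ** bpow u k)))) with
    (iters mu (S k) (v ** (u ** bpow u k))). rewrite iters_S. f_equal. f_equal. nr.
Qed.

Lemma small_sum_qcomm1 (u v : A) mu : Cmod mu <= 1 -> u ** v = bscal A mu (v ** u) ->
  small u -> small v -> small (u +++ v).
Proof.
  intros Hm Huv Hu Hv eps Heps.
  destruct (Hu (eps/2) ltac:(lra)) as [Ku HKu].
  destruct (Hv (eps/2) ltac:(lra)) as [Kv HKv].
  pose proof (small_K_nonneg _ _ _ HKu). pose proof (small_K_nonneg _ _ _ HKv).
  assert (Main : forall n j k, nrm (bpow v j ** (bpow u k ** bpow (u +++ v) n))
     <= 2 ^ n * Kv * Ku * (eps/2) ^ (j + k + n)).
  { induction n; intros j k.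
    - simpl. rewrite bmul_1r, Nat.add_0_r, pow_add. eapply Rle_trans. apply bnorm_submult.
      replace (1 * Kv * Ku * ((eps / 2) ^ j * (eps / 2) ^ k)) with
        ((Kv * (eps/2)^j) * (Ku * (eps/2)^k)) by ring.
      apply Rmult_le_compat; try apply bnorm_ge0; auto.
    - assert (E : bpow v j ** (bpow u k ** bpow (u +++ v) (S n)) =
        bpow v j ** (bpow u (S k) ** bpow (u +++ v) n) +++
        iters mu k (bpow v (S j) ** (bpow u k ** bpow (u +++ v) n))).
      { transitivity (bpow v j ** (bpow u (S k) ** bpow (u +++ v) n) +++
           bpow v j ** ((bpow u k ** v) ** bpow (u +++ v) n)).
        { rewrite (bpow_Sr u k), (bpow_S (u +++ v) n). nr. }
        f_equal. rewrite (qcomm_pow u v mu Huv k), iters_mull, iters_mulr. f_equal.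
        rewrite (bpow_Sr v j). nr. }
      rewrite E. eapply Rle_trans. apply bnorm_triangle.
      eapply Rle_trans. apply Rplus_le_compat. apply IHn.
      eapply Rle_trans. apply iters_norm; auto. apply IHn.
      replace (j + S k + n)%nat with (j + k + S n)%nat by lia.
      replace (S j + k + n)%nat with (j + k + S n)%nat by lia.
      simpl. lra. }
  exists (Kv * Ku). intros n.
  specialize (Main n O O). simpl in Main.
  replace (bone ** (bone ** bpow (u +++ v) n)) with (bpow (u +++ v) n) in Main by nr.
  eapply Rle_trans. apply Main. right. unfold Rdiv. rewrite Rpow_mult_distr, pow_inv.
  field. apply pow_nonzero. lra.
Qed.

Lemma small_sum_qcomm (u v : A) lam : lam <> C0 -> u ** v = bscal A lam (v ** u) ->
  small u -> small v -> small (u +++ v).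
Proof.
  intros Hl Huv Hu Hv.
  destruct lam as [x y].
  set (d := x ^ 2 + y ^ 2).
  assert (Hd : 0 < d).
  { unfold d. destruct (Req_dec x 0); destruct (Req_dec y 0).
    - subst. exfalso. apply Hl. reflexivity.
    - assert (0 < y^2) by (pose proof (Rsqr_pos_lt _ ltac:(eassumption)) as HH; unfold Rsqr in HH; simpl; lra). pose proof (pow2_ge_0 x). lra.
    - assert (0 < x^2) by (pose proof (Rsqr_pos_lt _ ltac:(eassumption)) as HH; unfold Rsqr in HH; simpl; lra). pose proof (pow2_ge_0 y). lra.
    - assert (0 < y^2) by (pose proof (Rsqr_pos_lt _ ltac:(eassumption)) as HH; unfold Rsqr in HH; simpl; lra). pose proof (pow2_ge_0 x). lra. }
  destruct (Rle_dec d 1) as [Hd1 | Hd1].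
  - apply small_sum_qcomm1 with (x, y); auto.
    unfold Cmod; simpl fst; simpl snd. rewrite <- sqrt_1. apply sqrt_le_1_alt. exact Hd1.
  - set (mu := (x / d, - y / d)).
    assert (Hvu : v ** u = bscal A mu (u ** v)).
    { rewrite Huv, bscal_assoc. unfold mu, Cmult; simpl fst; simpl snd.
      replace (x / d * x - - y / d * y, x / d * y + - y / d * x) with Defs.C1.
      symmetry; apply bscal_1. unfold Defs.C1. f_equal; unfold d in *; field; lra. }
    replace (u +++ v) with (v +++ u) by apply badd_comm.
    apply small_sum_qcomm1 with mu; auto.
    unfold Cmod, mu; simpl fst; simpl snd. rewrite <- sqrt_1. apply sqrt_le_1_alt.
    replace ((x / d) ^ 2 + (- y / d) ^ 2) with (/ d) by (unfold d in *; field; lra).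
    rewrite <- Rinv_1. apply Rinv_le_contravar; lra.
Qed.

Lemma partial_diff (f : nat -> A) C : (forall n, nrm (f n) <= C * (/2) ^ n) ->
  forall d n, nrm (bpartial f (n + d) --- bpartial f n) <= 2 * C * ((/2) ^ n - (/2) ^ (n + d)).
Proof.
  intros Hf d. induction d; intros n.
  - rewrite Nat.add_0_r. replace (bpartial f n --- bpartial f n) with (bzero : A) by nr.
    rewrite norm_zero. lra.
  - replace (n + S d)%nat with (S (n + d)) by lia. simpl bpartial.
    replace (bpartial f (n + d)%nat +++ f (n + d)%nat --- bpartial f n) with
       ((bpartial f (n + d)%nat --- bpartial f n) +++ f (n + d)%nat) by nr.
    eapply Rle_trans. apply bnorm_triangle.
    eapply Rle_trans. apply Rplus_le_compat. apply IHd. apply Hf.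
    right. simpl. field.
Qed.

Lemma geom_series (f : nat -> A) C : (forall n, nrm (f n) <= C * (/2) ^ n) ->
  exists S, bseries_sum f S.
Proof.
  intros Hf.
  assert (HC : 0 <= C). { specialize (Hf O). simpl in Hf. pose proof (bnorm_ge0 A (f O)). lra. }
  assert (Hd : forall m n, (n <= m)%nat -> nrm (bpartial f m --- bpartial f n) <= 2 * C * (/2) ^ n).
  { intros m n Hmn. replace m with (n + (m - n))%nat by lia.
    eapply Rle_trans. apply partial_diff; auto.
    assert (0 <= (/2) ^ (n + (m - n))) by (apply pow_le; lra). nra. }
  destruct (bcomplete A (bpartial f)) as [l Hl].
  - intros eps Heps.
    destruct (pow_lt_1_zero (/2) ltac:(rewrite Rabs_right; lra) (eps / (2 * C + 1))
       ltac:(apply Rdiv_lt_0_compat; lra)) as [N HN].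
    exists N. intros m n Hm Hn.
    assert (Hb : forall k, (N <= k)%nat -> 2 * C * (/2) ^ k < eps).
    { intros k Hk. specialize (HN k Hk). rewrite Rabs_right in HN by (apply Rle_ge, pow_le; lra).
      apply Rmult_lt_compat_l with (r := 2 * C + 1) in HN; [|lra].
      replace ((2 * C + 1) * (eps / (2 * C + 1))) with eps in HN by (field; lra).
      assert (0 <= (/2) ^ k) by (apply pow_le; lra). nra. }
    destruct (Compare_dec.le_ge_dec n m).
    + eapply Rle_lt_trans. apply Hd; auto. apply Hb; auto.
    + fold (bsub (bpartial f m) (bpartial f n)). rewrite norm_sub_sym.
      eapply Rle_lt_trans. apply Hd; lia. apply Hb; auto.
  - exists l. exact Hl.
Qed.

Lemma lim_unique (u : nat -> A) l l' : bconverges u l -> bconverges u l' -> l = l'.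
Proof.
  intros H1 H2. apply sub_eq0. apply bnorm_eq0.
  apply Rle_antisym; [| apply bnorm_ge0].
  apply Rnot_lt_le. intros Hp.
  set (e := nrm (l --- l')) in *.
  destruct (H1 (e/2) ltac:(lra)) as [N1 HN1]. destruct (H2 (e/2) ltac:(lra)) as [N2 HN2].
  specialize (HN1 (N1 + N2)%nat ltac:(lia)). specialize (HN2 (N1 + N2)%nat ltac:(lia)).
  assert (nrm (l --- l') <= nrm (bopp A (u (N1 + N2)%nat --- l)) + nrm (u (N1 + N2)%nat --- l')).
  { replace (l --- l') with (bopp A (u (N1 + N2)%nat --- l) +++ (u (N1 + N2)%nat --- l')) by nr.
    apply bnorm_triangle. }
  rewrite norm_opp in H. fold e in H. lra.
Qed.

Lemma lim_mull (u : nat -> A) l z : bconverges u l -> bconverges (fun n => z ** u n) (z ** l).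
Proof.
  intros H eps Heps.
  destruct (H (eps / (nrm z + 1))) as [N HN].
  { apply Rdiv_lt_0_compat; auto. pose proof (bnorm_ge0 A z); lra. }
  exists N. intros n Hn.
  replace (z ** u n --- z ** l) with (z ** (u n --- l)) by nr.
  eapply Rle_lt_trans. apply bnorm_submult.
  specialize (HN n Hn). pose proof (bnorm_ge0 A z). pose proof (bnorm_ge0 A (u n --- l)).
  apply Rle_lt_trans with ((nrm z + 1) * nrm (u n --- l)). nra.
  apply Rmult_lt_compat_l with (r := nrm z + 1) in HN; [|lra].
  replace ((nrm z + 1) * (eps / (nrm z + 1))) with eps in HN by (field; lra). lra.
Qed.

Lemma lim_mulr (u : nat -> A) l z : bconverges u l -> bconverges (fun n => u n ** z) (l ** z).
Proof.
  intros H eps Heps.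
  destruct (H (eps / (nrm z + 1))) as [N HN].
  { apply Rdiv_lt_0_compat; auto. pose proof (bnorm_ge0 A z); lra. }
  exists N. intros n Hn.
  replace (u n ** z --- l ** z) with ((u n --- l) ** z) by nr.
  eapply Rle_lt_trans. apply bnorm_submult.
  specialize (HN n Hn). pose proof (bnorm_ge0 A z). pose proof (bnorm_ge0 A (u n --- l)).
  apply Rle_lt_trans with ((nrm z + 1) * nrm (u n --- l)). nra.
  apply Rmult_lt_compat_l with (r := nrm z + 1) in HN; [|lra].
  replace ((nrm z + 1) * (eps / (nrm z + 1))) with eps in HN by (field; lra). lra.
Qed.

Lemma lim_addc (u : nat -> A) l z : bconverges u l -> bconverges (fun n => z +++ u n) (z +++ l).
Proof.
  intros H eps Heps. destruct (H eps Heps) as [N HN]. exists N. intros n Hn.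
  replace (z +++ u n --- (z +++ l)) with (u n --- l) by nr. auto.
Qed.

Lemma lim_shift (u : nat -> A) l : bconverges u l -> bconverges (fun n => u (S n)) l.
Proof.
  intros H eps Heps. destruct (H eps Heps) as [N HN]. exists N. intros n Hn. apply HN. lia.
Qed.

Lemma lim_ext (u v : nat -> A) l : (forall n, u n = v n) -> bconverges u l -> bconverges v l.
Proof. intros E H eps Heps. destruct (H eps Heps) as [N HN]. exists N. intros n Hn. rewrite <- E. auto. Qed.

Lemma partial_mull (f : nat -> A) z n : z ** bpartial f n = bpartial (fun k => z ** f k) n.
Proof. induction n; simpl. nr. rewrite <- IHn. nr. Qed.
Lemma partial_mulr (f : nat -> A) z n : bpartial f n ** z = bpartial (fun k => f k ** z) n.
Proof. induction n; simpl. nr. rewrite <- IHn. nr. Qed.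
Lemma partial_ext (f g : nat -> A) n : (forall k, f k = g k) -> bpartial f n = bpartial g n.
Proof. intros E; induction n; simpl; auto. now rewrite IHn, E. Qed.
Lemma partial_shift (f : nat -> A) n : bpartial f (S n) = f O +++ bpartial (fun k => f (S k)) n.
Proof. induction n; simpl. nr. simpl in IHn. rewrite IHn. nr. Qed.

Lemma main (lam : Cplx) (a b bd : A) :
  lam <> C0 -> qnil a -> is_gdrazin b bd ->
  a ** b = bscal A lam (b ** (a ** spectral_idem b bd)) ->
  gdrazin_invertible (a +++ b) /\
  exists S : A,
    bseries_sum (fun n => bpow bd (n + 2) ** (a ** bpow (a +++ b) n)) S /\
    is_gdrazin (a +++ b) (bd +++ S).
Proof.
  intros Hl Ha [Hc [Hbd Hq]] Hab.
  unfold commutes in Hc. unfold spectral_idem in Hab.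
  remember (b ** bd) as e eqn:He.
  remember (bone --- e) as p eqn:Hp.
  assert (F_ee : e ** e = e).
  { transitivity (b ** (bd ** e)). rewrite He at 1. nr. rewrite <- Hbd. auto. }
  assert (F_ebd : e ** bd = bd).
  { rewrite Hc at 1. transitivity (bd ** (b ** bd)). nr. rewrite <- He. auto. }
  assert (F_eb : e ** b = b ** e).
  { rewrite He at 1. rewrite Hc. nr. }
  assert (F_pe : p ** e = bzero).
  { rewrite Hp. transitivity (e --- e ** e). nr. rewrite F_ee. nr. }
  assert (F_pp : p ** p = p).
  { rewrite Hp. transitivity (bone --- e --- e +++ e ** e). nr. rewrite F_ee. nr. }
  assert (F_pbd : p ** bd = bzero).
  { rewrite Hp. transitivity (bd --- e ** bd). nr. rewrite F_ebd. nr. }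
  assert (F_pb : p ** b = b ** p).
  { rewrite Hp. transitivity (b --- e ** b). nr. rewrite F_eb. nr. }
  assert (F_ae : a ** e = bzero).
  { rewrite He. transitivity ((a ** b) ** bd). nr. rewrite Hab, scal_mul_l.
    transitivity (bscal A lam (b ** a ** (p ** bd))). f_equal; nr.
    rewrite F_pbd, mul0r. apply scal0. }
  assert (F_abd : a ** bd = bzero).
  { rewrite <- F_ebd. transitivity ((a ** e) ** bd). nr. rewrite F_ae. nr. }
  assert (F_ap : a ** p = a).
  { rewrite Hp. transitivity (a --- a ** e). nr. rewrite F_ae. nr. }
  remember (a +++ b) as x eqn:Hx.
  remember (p ** a +++ b ** p) as c eqn:Hcdef.
  assert (F_px : p ** x = c).
  { transitivity (p ** a +++ p ** b). rewrite Hx; nr. rewrite F_pb. auto. }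
  assert (F_cp : c ** p = c).
  { rewrite Hcdef. transitivity (p ** (a ** p) +++ b ** (p ** p)). nr. rewrite F_ap, F_pp. auto. }
  assert (F_pxn : forall n, p ** bpow x n = bpow c n ** p).
  { induction n; simpl. nr. transitivity ((p ** x) ** bpow x n). nr. rewrite F_px.
    transitivity ((c ** p) ** bpow x n). rewrite F_cp; auto.
    transitivity (c ** (p ** bpow x n)). nr. rewrite IHn. nr. }
  assert (F_axn : forall n, a ** bpow x n = a ** bpow c n ** p).
  { intros n. rewrite <- F_ap at 1. transitivity (a ** (p ** bpow x n)). nr. rewrite F_pxn. nr. }
  assert (Hsv : small (b ** p)).
  { apply qnil_small. replace (b ** p) with (bsub b (bmul A (bpow b 2) bd)); auto.
    rewrite Hp, He. simpl. nr. }
  assert (F_pan : forall n, bpow (p ** a) (S n) = p ** bpow a (S n)).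
  { induction n. simpl. nr.
    change (bpow (p ** a) (S (S n))) with ((p ** a) ** bpow (p ** a) (S n)). rewrite IHn.
    transitivity (p ** (a ** p) ** bpow a (S n)). nr. rewrite F_ap.
    rewrite (bpow_S a (S n)). nr. }
  assert (Hsu : small (p ** a)).
  { apply small_transfer with a (nrm p). apply bnorm_ge0.
    - intros n. rewrite F_pan. eapply Rle_trans. apply bnorm_submult.
      pose proof (bnorm_ge0 A (bpow a n)). pose proof (bnorm_ge0 A p).
      pose proof (bnorm_ge0 A (bpow a (S n))). nra.
    - apply qnil_small; auto. }
  assert (Huv : (p ** a) ** (b ** p) = bscal A lam ((b ** p) ** (p ** a))).
  { transitivity (p ** (a ** b) ** p). nr. rewrite Hab, scal_mul_r, scal_mul_l. f_equal.
    rewrite F_ap. transitivity ((p ** b) ** (a ** p)). nr. rewrite F_pb, F_ap.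
    transitivity (b ** (p ** p) ** a). rewrite F_pp. nr. nr. }
  assert (Hcs : small c).
  { rewrite Hcdef. apply small_sum_qcomm with lam; auto. }
  set (T := fun n => bpow bd (n + 2) ** (a ** bpow x n)).
  set (B := nrm bd).
  assert (HB : 0 <= B) by apply bnorm_ge0.
  set (eps0 := / (2 * (B + 1))).
  assert (Heps0 : 0 < eps0) by (unfold eps0; apply Rinv_0_lt_compat; lra).
  destruct (Hcs eps0 Heps0) as [K HK].
  pose proof (small_K_nonneg _ _ _ HK) as HK0.
  assert (HBe : B * eps0 <= / 2).
  { replace (B * eps0) with (/2 * (B / (B + 1))) by (unfold eps0; field; lra).
    rewrite <- (Rmult_1_r (/2)) at 2. apply Rmult_le_compat_l. lra.
    apply Rmult_le_reg_r with (B + 1). lra. unfold Rdiv. rewrite Rmult_assoc, Rinv_l; lra. }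
  assert (HT : forall n, nrm (T n) <= (nrm bone * B ^ 2 * nrm a * nrm p * K) * (/2) ^ n).
  { intros n. unfold T. rewrite F_axn.
    eapply Rle_trans. apply bnorm_submult.
    pose proof (bnorm_ge0 A (bpow bd (n + 2))). pose proof (bnorm_ge0 A a).
    pose proof (bnorm_ge0 A p). pose proof (bnorm_ge0 A bone).
    pose proof (bnorm_ge0 A (bpow c n)). pose proof (bnorm_ge0 A (a ** bpow c n ** p)).
    eapply Rle_trans. apply Rmult_le_compat; auto. apply norm_pow. apply norm_mul3.
    fold B. rewrite pow_add.
    assert (HBn : 0 <= B ^ n) by (apply pow_le; auto).
    assert (HH2 : B ^ n * nrm (bpow c n) <= K * (/2) ^ n).
    { apply Rle_trans with (B ^ n * (K * eps0 ^ n)). apply Rmult_le_compat_l; auto.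
      replace (B ^ n * (K * eps0 ^ n)) with (K * (B * eps0) ^ n) by (rewrite Rpow_mult_distr; ring).
      apply Rmult_le_compat_l; auto. apply pow_incr. split; auto.
      apply Rmult_le_pos; lra. }
    apply Rle_trans with ((nrm bone * B ^ 2 * nrm a * nrm p) * (B ^ n * nrm (bpow c n))).
    right; ring.
    replace (nrm bone * B ^ 2 * nrm a * nrm p * K * (/ 2) ^ n) with
      ((nrm bone * B ^ 2 * nrm a * nrm p) * (K * (/ 2) ^ n)) by ring.
    apply Rmult_le_compat_l; auto.
    assert (0 <= B ^ 2) by (apply pow_le; auto).
    repeat apply Rmult_le_pos; auto; lra. }
  destruct (geom_series T _ HT) as [Sv HS].
  unfold bseries_sum in HS.
  assert (I1 : Sv ** p = Sv).
  { apply (lim_unique (fun n => bpartial T n ** p)). apply lim_mulr; auto.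
    apply lim_ext with (bpartial T); auto. intros n. rewrite partial_mulr. apply partial_ext.
    intros k. unfold T. rewrite F_axn.
    transitivity (bpow bd (k + 2) ** (a ** bpow c k ** (p ** p))). rewrite F_pp; auto. nr. }
  assert (I2 : e ** Sv = Sv).
  { apply (lim_unique (fun n => e ** bpartial T n)). apply lim_mull; auto.
    apply lim_ext with (bpartial T); auto. intros n. rewrite partial_mull. apply partial_ext.
    intros k. unfold T. replace (k + 2)%nat with (S (k + 1)%nat) by lia. rewrite bpow_S.
    transitivity ((e ** bd) ** bpow bd (k + 1) ** (a ** bpow x k)). rewrite F_ebd; nr. nr. }
  assert (I3 : a ** Sv = bzero).
  { rewrite <- I2. transitivity ((a ** e) ** Sv). nr. rewrite F_ae. nr. }
  assert (I4a : Sv ** e = bzero).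
  { rewrite <- I1. transitivity (Sv ** (p ** e)). nr. rewrite F_pe. nr. }
  assert (I4b : Sv ** bd = bzero).
  { rewrite <- I1. transitivity (Sv ** (p ** bd)). nr. rewrite F_pbd. nr. }
  assert (I4c : Sv ** Sv = bzero).
  { rewrite <- I1 at 1. transitivity (Sv ** (p ** (e ** Sv))). rewrite I2. nr.
    transitivity (Sv ** (p ** e) ** Sv). nr. rewrite F_pe. nr. }
  assert (F_xbd : x ** bd = e).
  { rewrite Hx. transitivity (a ** bd +++ b ** bd). nr. rewrite F_abd, <- He. nr. }
  assert (F_bdx : bd ** x = bd ** a +++ e).
  { rewrite Hx. transitivity (bd ** a +++ bd ** b). nr. rewrite <- Hc. auto. }
  set (U := fun k => bpow bd (S k) ** (a ** bpow x k)).
  assert (HxT : forall k, x ** T k = U k).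
  { intros k. unfold T, U. replace (k + 2)%nat with (S (S k)) by lia.
    rewrite (bpow_S bd (S k)).
    transitivity ((x ** bd) ** (bpow bd (S k) ** (a ** bpow x k))). nr. rewrite F_xbd.
    rewrite (bpow_S bd k).
    transitivity ((e ** bd) ** bpow bd k ** (a ** bpow x k)). nr. rewrite F_ebd. nr. }
  assert (HTx : forall k, T k ** x = U (S k)).
  { intros k. unfold T, U. replace (k + 2)%nat with (S (S k)) by lia.
    rewrite (bpow_Sr x k). nr. }
  assert (I5 : x ** Sv = bd ** a +++ Sv ** x).
  { apply (lim_unique (fun n => x ** bpartial T (S n))).
    - apply (lim_shift (fun n => x ** bpartial T n)). apply lim_mull; auto.
    - apply lim_ext with (fun n => bd ** a +++ bpartial T n ** x).
      + intros n. rewrite partial_mulr, partial_mull.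
        rewrite (partial_ext _ _ (S n) HxT), (partial_ext _ _ n HTx), partial_shift.
        f_equal. unfold U. simpl. nr.
      + apply lim_addc, lim_mulr; auto. }
  assert (Hcomm : x ** (bd +++ Sv) = (bd +++ Sv) ** x).
  { transitivity (x ** bd +++ x ** Sv). nr. rewrite I5, F_xbd.
    transitivity (bd ** x +++ Sv ** x). rewrite F_bdx. nr. nr. }
  assert (Hxy : x ** (bd +++ Sv) = e +++ (bd ** a +++ Sv ** x)).
  { transitivity (x ** bd +++ x ** Sv). nr. rewrite I5, F_xbd. auto. }
  assert (F_xe : x ** e = e ** b).
  { rewrite Hx. transitivity (a ** e +++ b ** e). nr. rewrite F_ae, F_eb. nr. }
  set (r := bd ** a ** x +++ Sv ** (x ** x)).
  assert (F_er : e ** r = r).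
  { unfold r. transitivity ((e ** bd) ** a ** x +++ (e ** Sv) ** (x ** x)). nr.
    rewrite F_ebd, I2. auto. }
  assert (F_re : r ** e = bzero).
  { unfold r. transitivity (bd ** a ** (x ** e) +++ Sv ** x ** (x ** e)). nr.
    rewrite F_xe. transitivity (bd ** (a ** e) ** b +++ Sv ** (x ** e) ** b). nr.
    rewrite F_ae, F_xe. transitivity ((Sv ** e) ** b ** b). nr. rewrite I4a. nr. }
  assert (F_rr : r ** r = bzero).
  { rewrite <- F_er at 2. transitivity ((r ** e) ** r). nr. rewrite F_re. nr. }
  assert (F_cr : c ** r = bzero).
  { rewrite <- F_cp, <- F_er. transitivity (c ** (p ** e) ** r). nr. rewrite F_pe. nr. }
  assert (Hm : bsub x (bmul A (bpow x 2) (bd +++ Sv)) = c --- r).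
  { transitivity (x --- x ** (x ** (bd +++ Sv))). simpl. nr. rewrite Hxy.
    transitivity (x --- (x ** e +++ (x ** bd) ** a +++ (x ** Sv) ** x)). nr.
    rewrite F_xbd, I5, F_xe, Hcdef, Hp. unfold r. rewrite Hx at 1. rewrite F_eb. nr. }
  assert (Hmpow : forall n, bpow (c --- r) (S n) = bpow c (S n) --- r ** bpow c n).
  { induction n. simpl. nr.
    change (bpow (c --- r) (S (S n))) with ((c --- r) ** bpow (c --- r) (S n)). rewrite IHn.
    change (bpow c (S (S n))) with (c ** bpow c (S n)).
    transitivity (c ** bpow c (S n) --- (c ** r) ** bpow c n --- r ** bpow c (S n)
       +++ (r ** r) ** bpow c n). nr. rewrite F_cr, F_rr. nr. }
  assert (Hg : is_gdrazin x (bd +++ Sv)).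
  { split; [| split].
    - exact Hcomm.
    - symmetry. transitivity ((bd +++ Sv) ** x ** (bd +++ Sv)). nr. rewrite <- Hcomm.
      transitivity ((x ** bd +++ x ** Sv) ** (bd +++ Sv)). nr. rewrite F_xbd, I5.
      transitivity (e ** bd +++ e ** Sv +++ bd ** (a ** bd) +++ bd ** (a ** Sv)
         +++ Sv ** (x ** bd) +++ Sv ** (x ** Sv)). nr.
      rewrite F_ebd, I2, F_abd, I3, F_xbd, I4a, I5.
      transitivity (bd +++ Sv +++ (Sv ** bd) ** a +++ (Sv ** Sv) ** x). nr.
      rewrite I4b, I4c. nr.
    - rewrite Hm. apply small_qnil. apply small_transfer with c (1 + nrm r).
      pose proof (bnorm_ge0 A r); lra.
      + intros n. rewrite Hmpow. unfold bsub. eapply Rle_trans. apply bnorm_triangle.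
        rewrite norm_opp. pose proof (bnorm_ge0 A r). pose proof (bnorm_ge0 A (bpow c n)).
        pose proof (bnorm_ge0 A (bpow c (S n))).
        assert (nrm (r ** bpow c n) <= nrm r * nrm (bpow c n)) by apply bnorm_submult.
        nra.
      + exact Hcs. }
  split. exists (bd +++ Sv). exact Hg.
  exists Sv. split; auto.
Qed.

End S.

Theorem lemma2p3 (A : BanachAlgebra) (lam : Cplx) (a b bd : A) :
  lam <> C0 ->
  qnil a ->
  is_gdrazin b bd ->
  bmul A a b = bscal A lam (bmul A b (bmul A a (spectral_idem b bd))) ->
  gdrazin_invertible (badd A a b) /\
  exists S : A,
    bseries_sum (fun n => bmul A (bpow bd (n + 2)) (bmul A a (bpow (badd A a b) n))) S /\
    is_gdrazin (badd A a b) (badd A bd S).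
Proof. exact (main A lam a b bd). Qed.
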